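(* For $n>0$ and $J\subseteq S$, there is a bijection from the set $\mathrm{NN}_n^J$ of $J$-nonnesting partitions of $[n]$ to the set of order ideals of the parabolic root poset $\Phi_+^J$.
   Context: $S=\{s_1,\dots,s_{n-1}\}$ with $s_i=(i,i+1)$ the adjacent transpositions of $\mathfrak{S}_n$. For $J\subseteq S$, writing $J=S\setminus\{s_{j_1},\dots,s_{j_r}\}$ with $j_1<\dots<j_r$, the $J$-regions are $\{1,\dots,j_1\},\{j_1+1,\dots,j_2\},\dots,\{j_r+1,\dots,n\}$. For a set partition $\mathbf P$ of $[n]$, a bump is a pair $(a,b)$, $a<b$, with $a,b$ in the same part and no element of that part strictly between them. $\mathbf P$ is $J$-nonnesting if (NN1) no two distinct elements of the same $J$-region lie in the same part, and (NN2) there are no two distinct bumps $(i_1,i_2),(j_1,j_2)$ with $i_1<j_1<j_2<i_2$. The root poset of $\mathfrak{S}_n$ is the set of transpositions $(i,j)$, $1\le i<j\le n$, ordered by $(i_1,i_2)\le(j_1,j_2)$ iff $i_1\ge j_1$ and $i_2\le j_2$. The parabolic root poset $\Phi_+^J$ is the order filter of the root poset generated by the adjacent transpositions $s_j=(j,j+1)$ with $s_j\notin J$ (with the induced order). *)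

(* Defs.v *)
From mathcomp Require Import all_boot.
Set Implicit Arguments. Unset Strict Implicit. Unset Printing Implicit Defensive.

(* Conventions (0-indexed): [n] is 'I_n (element i stands for i+1).
   A subset J of S = {s_1,...,s_(n-1)} is a set J : {set 'I_n.-1}, where
   k : 'I_n.-1 stands for s_(k+1) = (k+1, k+2), i.e. the transposition
   swapping the 0-indexed elements k and k+1 of 'I_n. *)

Section Defs.
Variable n : nat.

(* a and b lie in the same J-region: no region boundary s_k (k not in J)
   separates them, i.e. every s_k with min a b <= k < max a b lies in J. *)
Definition same_region (J : {set 'I_n.-1}) (a b : 'I_n) : bool :=
  [forall k : 'I_n.-1, ((minn a b <= k) && (k < maxn a b)) ==> (k \in J)].

Definition set_partition (P : {set {set 'I_n}}) : bool :=
  partition P [set: 'I_n].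

Definition bump (P : {set {set 'I_n}}) (a b : 'I_n) : bool :=
  (a < b) && [exists B in P, [&& a \in B, b \in B &
                              [forall c in B, ~~ ((a < c) && (c < b))]]].

Definition NN1 (J : {set 'I_n.-1}) (P : {set {set 'I_n}}) : bool :=
  [forall B in P, forall a in B, forall b in B,
     (a != b) ==> ~~ same_region J a b].

Definition NN2 (P : {set {set 'I_n}}) : bool :=
  [forall i1 : 'I_n, forall i2 : 'I_n, forall j1 : 'I_n, forall j2 : 'I_n,
     [&& bump P i1 i2, bump P j1 j2 & (i1, i2) != (j1, j2)] ==>
       ~~ [&& i1 < j1, j1 < j2 & j2 < i2]].

Definition J_nonnesting (J : {set 'I_n.-1}) (P : {set {set 'I_n}}) : bool :=
  [&& set_partition P, NN1 J P & NN2 P].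

Definition NNset (J : {set 'I_n.-1}) : {set {set {set 'I_n}}} :=
  [set P | J_nonnesting J P].

(* root poset: transpositions (i,j), i<j, encoded as pairs *)
Definition is_root (r : 'I_n * 'I_n) : bool := r.1 < r.2.

Definition root_le (r s : 'I_n * 'I_n) : bool :=
  (s.1 <= r.1) && (r.2 <= s.2).

Definition simple_root (k : 'I_n.-1) (r : 'I_n * 'I_n) : bool :=
  (nat_of_ord r.1 == k) && (nat_of_ord r.2 == k.+1).

Definition PhiJ (J : {set 'I_n.-1}) : {set 'I_n * 'I_n} :=
  [set r | is_root r &&
     [exists k : 'I_n.-1, exists g : 'I_n * 'I_n,
        [&& k \notin J, simple_root k g & root_le g r]]].

Definition order_ideal (J : {set 'I_n.-1}) (A : {set 'I_n * 'I_n}) : bool :=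
  (A \subset PhiJ J) &&
  [forall x in PhiJ J, forall y in PhiJ J,
     (root_le x y && (y \in A)) ==> (x \in A)].

Definition idealset (J : {set 'I_n.-1}) : {set {set 'I_n * 'I_n}} :=
  [set A | order_ideal J A].

End Defs.

(* Main.v *)
Require Import Defs.
From mathcomp Require Import all_boot zify.
Set Implicit Arguments. Unset Strict Implicit. Unset Printing Implicit Defensive.

Notation dbump := Defs.bump.

Section Match.
Variable n : nat.
Variable M : {set 'I_n * 'I_n}.
Hypothesis Mlt : forall a b, (a, b) \in M -> a < b.
Hypothesis Manti : forall x y, x \in M -> y \in M -> root_le x y -> x = y.

Definition Rm : rel 'I_n := fun x y => ((x, y) \in M) || ((y, x) \in M).

Lemma Rm_sym : symmetric Rm.
Proof. by move=> x y; rewrite /Rm orbC. Qed.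

Lemma rightuniq a b c : (a, b) \in M -> (c, b) \in M -> a = c.
Proof.
move=> H1 H2; case: (ltngtP a c) => h.
- by have := Manti H2 H1; rewrite /root_le /= (ltnW h) leqnn => /(_ erefl) [->].
- by have := Manti H1 H2; rewrite /root_le /= (ltnW h) leqnn => /(_ erefl) [->].
- exact: val_inj.
Qed.

Lemma leftuniq a b c : (a, b) \in M -> (a, c) \in M -> b = c.
Proof.
move=> H1 H2; case: (ltngtP b c) => h.
- by have := Manti H1 H2; rewrite /root_le /= (ltnW h) leqnn => /(_ erefl) [->].
- by have := Manti H2 H1; rewrite /root_le /= (ltnW h) leqnn => /(_ erefl) [->].
- exact: val_inj.
Qed.

Lemma path_right p x0 x1 : uniq [:: x0, x1 & p] -> path Rm x1 p ->
  (x0, x1) \in M -> forall y, y \in p -> x1 < y.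
Proof.
elim: p x0 x1 => [//|x2 p IH] x0 x1 Hu /= /andP[R12 Hp] H01 y.
case/orP: R12 => H12.
- have lt12 := Mlt H12.
  have Hu' : uniq [:: x1, x2 & p] by case/andP: Hu.
  rewrite inE => /orP[/eqP -> //| yp].
  exact: ltn_trans lt12 (IH _ _ Hu' Hp H12 _ yp).
- have e := rightuniq H01 H12; subst x2.
  by move: Hu; rewrite /= !inE eqxx !orbT.
Qed.

Lemma path_left p x0 x1 : uniq [:: x0, x1 & p] -> path Rm x1 p ->
  (x1, x0) \in M -> forall y, y \in p -> y < x1.
Proof.
elim: p x0 x1 => [//|x2 p IH] x0 x1 Hu /= /andP[R12 Hp] H01 y.
case/orP: R12 => H12.
- have e := leftuniq H01 H12; subst x2.
  by move: Hu; rewrite /= !inE eqxx !orbT.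
- have lt12 := Mlt H12.
  have Hu' : uniq [:: x1, x2 & p] by case/andP: Hu.
  rewrite inE => /orP[/eqP -> //| yp].
  exact: ltn_trans (IH _ _ Hu' Hp H12 _ yp) lt12.
Qed.

Lemma conn_bounds a c : connect Rm a c ->
  c = a \/ (exists2 x1, (a, x1) \in M & x1 <= c) \/
  (exists2 x1, (x1, a) \in M & c <= x1).
Proof.
case/connectP=> p Hp ->{c}; case/shortenP: Hp => [[|x1 q]] Hq Hu _ /=.
  by left.
right; move: Hq => /= /andP[Ra Hq].
have Hl : last x1 q \in x1 :: q by exact: mem_last.
case/orP: Ra => H.
- left; exists x1 => //.
  move: Hl; rewrite inE => /orP[/eqP -> //|/(path_right Hu Hq H)].
  exact: ltnW.
- right; exists x1 => //.
  move: Hl; rewrite inE => /orP[/eqP -> //|/(path_left Hu Hq H)].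
  exact: ltnW.
Qed.

Definition Pm := equivalence_partition (connect Rm) [set: 'I_n].

Lemma Pm_equiv : {in [set: 'I_n] & &, equivalence_rel (connect Rm)}.
Proof.
move=> x y z _ _ _; split; first exact: connect0.
move=> Hxy; apply/idP/idP => H.
- rewrite (sym_connect_sym Rm_sym) in Hxy; exact: connect_trans Hxy H.
- exact: connect_trans Hxy H.
Qed.

Lemma Pm_part : partition Pm [set: 'I_n].
Proof. exact: equivalence_partitionP Pm_equiv. Qed.

Lemma Pm_block B : B \in Pm -> exists x, B = [set y | connect Rm x y].
Proof.
case/imsetP=> x _ ->; exists x; apply/setP=> y; by rewrite !inE.
Qed.

Lemma Pm_blockP x : [set y | connect Rm x y] \in Pm.
Proof.
apply/imsetP; exists x; rewrite ?inE //; apply/setP=> y; by rewrite !inE.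
Qed.

Lemma bump_Pm a b : dbump Pm a b = ((a, b) \in M).
Proof.
apply/idP/idP.
- case/andP=> ab /existsP[B /and4P[BP aB bB /forallP Hc]].
  have [x Bx] := Pm_block BP; subst B.
  move: aB bB; rewrite !inE => xa xb.
  have cs := sym_connect_sym Rm_sym.
  have inB c : connect Rm a c -> c \in [set y | connect Rm x y].
    by move=> h; rewrite inE (connect_trans xa h).
  have ab' : connect Rm a b by rewrite cs in xa; exact: connect_trans xa xb.
  case: (conn_bounds ab') => [e|[[x1 H1 H2]|[x1 H1 H2]]].
  + by rewrite e ltnn in ab.
  + case: (ltngtP x1 b) => h.
    * have := Hc x1; rewrite inB ?(Mlt H1) ?h //.
      by apply: connect1; rewrite /Rm H1.
    * by rewrite leqNgt h in H2.
    * by have -> : b = x1 by apply: val_inj.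
  + have := Mlt H1; lia.
- move=> H; rewrite /Defs.bump (Mlt H) /=; apply/existsP.
  exists [set y | connect Rm a y]; rewrite Pm_blockP !inE connect0 /=.
  rewrite connect1 /Rm ?H //=; apply/forallP=> c; apply/implyP.
  rewrite inE => /conn_bounds [->|[[x1 H1 H2]|[x1 H1 H2]]].
  + by rewrite ltnn.
  + have e := leftuniq H H1; subst x1; lia.
  + have := Mlt H1; lia.
Qed.

End Match.
Section Part.
Variable n : nat.
Implicit Types (P Q : {set {set 'I_n}}) (J : {set 'I_n.-1}).

Lemma part_same P D B1 B2 x : partition P D -> B1 \in P -> B2 \in P ->
  x \in B1 -> x \in B2 -> B1 = B2.
Proof.
case/and3P=> _ tI _ H1 H2 x1 x2.
by rewrite -(def_pblock tI H1 x1) -(def_pblock tI H2 x2).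
Qed.

Lemma bump_inB P a b B : set_partition P -> dbump P a b -> B \in P ->
  (a \in B) || (b \in B) ->
  [&& a \in B, b \in B & [forall c in B, ~~ ((a < c) && (c < b))]].
Proof.
move=> HP /andP[_ /existsP[B0 /and4P[B0P aB bB Hc]]] BP /orP[] xB.
- by rewrite -(part_same HP B0P BP aB xB) aB bB.
- by rewrite -(part_same HP B0P BP bB xB) aB bB.
Qed.

Lemma PhiJ_of J (a b : 'I_n) (k : 'I_n.-1) : a <= k -> k < b -> k \notin J ->
  (a, b) \in PhiJ J.
Proof.
move=> ak kb kJ; rewrite inE /is_root /=.
have ab : a < b by apply: leq_ltn_trans ak kb.
rewrite ab /=; apply/existsP; exists k.
have h1 : k < n by apply: ltn_trans kb (ltn_ord b).
have h2 : k.+1 < n by apply: leq_ltn_trans kb (ltn_ord b).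
apply/existsP; exists (Ordinal h1, Ordinal h2).
by rewrite kJ /simple_root /root_le /= !eqxx ak kb.
Qed.

Lemma not_same_region J (a b : 'I_n) : a < b -> ~~ same_region J a b ->
  (a, b) \in PhiJ J.
Proof.
move=> ab; rewrite /same_region negb_forall => /existsP[k].
rewrite negb_imply => /andP[/andP[h1 h2] kJ].
have e1 : minn a b = a by apply/minn_idPl; exact: ltnW.
have e2 : maxn a b = b by apply/maxn_idPr; exact: ltnW.
rewrite e1 e2 in h1 h2; exact: PhiJ_of h1 h2 kJ.
Qed.

Lemma bump_phi J P a b : J_nonnesting J P -> dbump P a b -> (a, b) \in PhiJ J.
Proof.
case/and3P=> HP /forallP NN1 _ Hb.
have ab : a < b by case/andP: Hb.
case/andP: (Hb) => _ /existsP[B /and4P[BP aB bB _]].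
have := NN1 B; rewrite BP /= => /forallP/(_ a); rewrite aB /= => /forallP/(_ b).
rewrite bB /= => /implyP; rewrite neq_ltn ab => /(_ erefl).
exact: not_same_region.
Qed.

Lemma bump_anti J P a b c d : J_nonnesting J P -> dbump P a b -> dbump P c d ->
  root_le (a, b) (c, d) -> (a, b) = (c, d).
Proof.
move=> NN H1 H2; rewrite /root_le /= => /andP[ca bd].
have HP : set_partition P by case/and3P: NN.
have ab : a < b by case/andP: H1.
have cd : c < d by case/andP: H2.
case: (ltngtP c a) => h1; last 2 first.
- by rewrite leqNgt h1 in ca.
- have e : c = a by apply: val_inj.
  subst c; case: (ltngtP b d) => h2; last 2 first.
  + by rewrite leqNgt h2 in bd.
  + by have -> : d = b by apply: val_inj.
  case/andP: H2 => _ /existsP[B /and4P[BP aB dB /forallP Hc]].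
  have := bump_inB HP H1 BP; rewrite aB /= => /(_ erefl) /andP[bB _].
  by have := Hc b; rewrite bB ab h2.
- case: (ltngtP b d) => h2; last 2 first.
  + by rewrite leqNgt h2 in bd.
  + have e : d = b by apply: val_inj.
    subst d.
    case/andP: H2 => _ /existsP[B /and4P[BP cB bB /forallP Hc]].
    have := bump_inB HP H1 BP; rewrite bB orbT => /(_ erefl) /and3P[aB _ _].
    by have := Hc a; rewrite aB h1 ab.
  case/and3P: NN => _ _ /forallP/(_ c)/forallP/(_ d)/forallP/(_ a)/forallP/(_ b).
  rewrite H1 H2 /= h1 ab h2 /= => /implyP H.
  have ne : (c, d) != (a, b) by apply/negP => /eqP [e _]; move: h1; rewrite e ltnn.
  by have := H ne.
Qed.

Lemma same_bumps P Q : set_partition P -> set_partition Q ->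
  (forall a b, dbump P a b -> dbump Q a b) ->
  forall x y, y \in pblock P x -> y \in pblock Q x.
Proof.
move=> HP HQ hb.
have [/eqP cP tP _] := and3P HP; have [/eqP cQ tQ _] := and3P HQ.
have xcP (x : 'I_n) : x \in cover P by rewrite cP inE.
have xcQ (x : 'I_n) : x \in cover Q by rewrite cQ inE.
suff H : forall x y : 'I_n, x < y -> y \in pblock P x -> y \in pblock Q x.
  move=> x y; case: (ltngtP x y) => h.
  - exact: H.
  - move=> yx; have : x \in pblock P y by rewrite (same_pblock tP yx) mem_pblock.
    move/(H _ _ h) => xy; by rewrite (same_pblock tQ xy) mem_pblock.
  - move=> _; have -> : y = x by apply: val_inj.
    by rewrite mem_pblock.
move=> x y; move: {2}(val y).+1 (ltnSn y) => k; elim: k y => [//|k IH] y yk xy yP.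
have Hx0 : (x \in pblock P x) && (x < y) by rewrite mem_pblock xcP xy.
case: (@arg_maxnP _ x (fun z => (z \in pblock P x) && (z < y)) (fun z : 'I_n => val z) Hx0) => c /andP[cB cy] Hmax.
have hbP : dbump P c y.
  rewrite /Defs.bump cy /=; apply/existsP; exists (pblock P x).
  rewrite pblock_mem ?xcP //= cB yP /=; apply/forallP=> z; apply/implyP=> zB.
  apply/negP=> /andP[cz zy]; have := Hmax z; rewrite zB zy /= => /(_ erefl).
  by rewrite leqNgt cz.
have := hb _ _ hbP; case/andP=> _ /existsP[B /and4P[BQ cB' yB' _]].
have yc : y \in pblock Q c by rewrite (def_pblock tQ BQ cB').
have xc : x <= c by exact: (Hmax x Hx0).
case: (ltngtP x c) => h.
- have : c \in pblock Q x by apply: IH => //; apply: leq_trans cy _.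
  by move=> cQx; rewrite -(same_pblock tQ cQx).
- by rewrite leqNgt h in xc.
- by have -> : x = c by apply: val_inj.
Qed.

Lemma bumps_eq P Q : set_partition P -> set_partition Q ->
  (forall a b, dbump P a b = dbump Q a b) -> P = Q.
Proof.
move=> HP HQ hb.
have h1 := same_bumps HP HQ (fun a b => ltac:(by rewrite hb)).

have h2 := same_bumps HQ HP (fun a b => ltac:(by rewrite hb)).
have [/eqP cP tP nP] := and3P HP; have [/eqP cQ tQ nQ] := and3P HQ.
have epb x : pblock P x = pblock Q x.
  by apply/setP=> y; apply/idP/idP; [exact: h1 | exact: h2].
have sub (P1 P2 : {set {set 'I_n}}) : partition P1 setT -> partition P2 setT ->
   (forall x, pblock P1 x = pblock P2 x) -> P1 \subset P2.
  move=> H1 H2 e; apply/subsetP=> B BP.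
  have [/eqP c1 t1 n1] := and3P H1; have [/eqP c2 t2 n2] := and3P H2.
  have : B != set0 by apply: contraNneq n1 => <-.
  case/set0Pn=> x xB; rewrite -(def_pblock t1 BP xB) e pblock_mem //.
  by rewrite c2 inE.
by apply/eqP; rewrite eqEsubset !sub.
Qed.

End Part.

Section Main.
Variable n : nat.
Implicit Types (P Q : {set {set 'I_n}}) (J : {set 'I_n.-1}) (A : {set 'I_n * 'I_n}).

Definition fmap J P : {set 'I_n * 'I_n} :=
  [set x in PhiJ J | [exists y, dbump P y.1 y.2 && root_le x y]].

Lemma root_le_trans (x y z : 'I_n * 'I_n) : root_le x y -> root_le y z -> root_le x z.
Proof. rewrite /root_le => /andP[h1 h2] /andP[h3 h4]; apply/andP; split; lia. Qed.

Lemma root_le_refl (x : 'I_n * 'I_n) : root_le x x.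
Proof. by rewrite /root_le !leqnn. Qed.

Lemma root_le_anti (x y : 'I_n * 'I_n) : root_le x y -> root_le y x -> x = y.
Proof.
case: x y => [a b] [c d]; rewrite /root_le /= => /andP[h1 h2] /andP[h3 h4].
have e1 : a = c by apply: val_inj; apply/eqP; rewrite eqn_leq h1 h3.
have e2 : b = d by apply: val_inj; apply/eqP; rewrite eqn_leq h2 h4.
by rewrite e1 e2.
Qed.

Lemma bump_anti2 J P (y w : 'I_n * 'I_n) : J_nonnesting J P ->
  dbump P y.1 y.2 -> dbump P w.1 w.2 -> root_le y w -> y = w.
Proof. by case: y w => [a b] [c d]; exact: bump_anti. Qed.

Lemma maxel J P y : J_nonnesting J P ->
  (y \in fmap J P) && [forall z in fmap J P, root_le y z ==> (z == y)] =
  dbump P y.1 y.2.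
Proof.
move=> NN; apply/idP/idP.
- case/andP; rewrite inE => /andP[_ /existsP[w /andP[bw yw]]] /forallP/(_ w).
  have wf : w \in fmap J P.
    rewrite inE; apply/andP; split.
      by case: w bw {yw} => a b /= bw; exact: bump_phi NN bw.
    by apply/existsP; exists w; rewrite bw root_le_refl.
  by rewrite wf yw /= => /eqP <-.
- move=> by_.
  have yf : y \in fmap J P.
    rewrite inE; apply/andP; split.
      by case: y by_ => a b /= bw; exact: bump_phi NN bw.
    by apply/existsP; exists y; rewrite by_ root_le_refl.
  rewrite yf /=; apply/forallP=> z; apply/implyP=> zf; apply/implyP=> yz.
  move: zf; rewrite inE => /andP[_ /existsP[w /andP[bw zw]]].
  have yw := root_le_trans yz zw.
  have e : y = w by exact: bump_anti2 NN by_ bw yw.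
  subst w; apply/eqP; exact: root_le_anti zw yz.
Qed.

Lemma fmap_inj J : {in NNset J &, injective (fmap J)}.
Proof.
move=> P Q; rewrite !inE => NP NQ e.
apply: bumps_eq; [by case/and3P: NP | by case/and3P: NQ |] => a b.
by rewrite -(maxel (a, b) NP) -(maxel (a, b) NQ) e.
Qed.

Lemma fmap_ideal J P : J_nonnesting J P -> order_ideal J (fmap J P).
Proof.
move=> NN; apply/andP; split.
  by apply/subsetP=> x; rewrite inE => /andP[].
apply/forallP=> x; apply/implyP=> xP; apply/forallP=> y; apply/implyP=> yP.
apply/implyP=> /andP[xy]; rewrite inE => /andP[_ /existsP[w /andP[bw yw]]].
rewrite inE xP /=; apply/existsP; exists w; by rewrite bw (root_le_trans xy yw).
Qed.

Lemma same_region_sym J (a b : 'I_n) : same_region J a b = same_region J b a.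
Proof. by rewrite /same_region minnC maxnC. Qed.

Lemma phi_not_same J (a b c : 'I_n) : (a, c) \in PhiJ J -> c <= b ->
  ~~ same_region J a b.
Proof.
rewrite inE => /andP[ac /existsP[k /existsP[g /and3P[kJ sk gr]]]] cb.
move: sk gr; rewrite /simple_root /root_le /= => /andP[/eqP g1 /eqP g2] /andP[h1 h2].
apply/negP=> /forallP/(_ k); rewrite /is_root /= in ac.
have e1 : minn a b = a by apply/minn_idPl; lia.
have e2 : maxn a b = b by apply/maxn_idPr; lia.
rewrite e1 e2 (negbTE kJ) implybF negb_and; apply/negP; rewrite negb_or !negbK.
apply/andP; split; lia.
Qed.

Lemma fmap_surj J A : order_ideal J A -> exists2 P, P \in NNset J & A = fmap J P.
Proof.
case/andP=> /subsetP AP /forallP Hid.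
set M := [set y in A | [forall z in A, root_le y z ==> (z == y)]].
have Mlt : forall a b, (a, b) \in M -> a < b.
  by move=> a b; rewrite inE => /andP[/AP]; rewrite inE => /andP[].
have Manti : forall x y, x \in M -> y \in M -> root_le x y -> x = y.
  move=> x y; rewrite inE => /andP[_ /forallP/(_ y) h]; rewrite inE => /andP[yA _] xy.
  by move: h; rewrite yA xy => /eqP.
have bP := bump_Pm Mlt Manti.
exists (Pm M).
  rewrite inE; apply/and3P; split.
  - exact: Pm_part.
  - apply/forallP=> B; apply/implyP=> BP; case: (Pm_block BP) => x ->.
    apply/forallP=> a; apply/implyP; rewrite inE => xa.
    apply/forallP=> b; apply/implyP; rewrite inE => xb; apply/implyP=> ab.
    have cs := sym_connect_sym (@Rm_sym _ M).
    have conn u v : connect (Rm M) x u -> connect (Rm M) x v -> connect (Rm M) u v.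
      by move=> h1 h2; rewrite cs in h1; exact: connect_trans h1 h2.
    wlog lt : a b xa xb ab / a < b.
      move=> W; case: (ltngtP a b) => h; first exact: W.
      - by rewrite same_region_sym; apply: W => //; rewrite eq_sym.
      - have e : a = b by apply: val_inj.
        by rewrite e eqxx in ab.
    case: (conn_bounds Mlt Manti (conn _ _ xa xb)) => [e|[[x1 H1 H2]|[x1 H1 H2]]].
    + by move: ab; rewrite e eqxx.
    + apply: (phi_not_same _ H2); apply: AP.
      by move: H1; rewrite inE => /andP[].
    + have := Mlt _ _ H1; lia.
  - apply/forallP=> i1; apply/forallP=> i2; apply/forallP=> j1; apply/forallP=> j2.
    apply/implyP; rewrite !bP => /and3P[H1 H2 ne]; apply/negP=> /and3P[h1 h2 h3].
    have := Manti _ _ H2 H1; rewrite /root_le /= (ltnW h1) (ltnW h3) => /(_ erefl) [e1 e2].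
    by move: h1; rewrite e1 ltnn.
apply/setP=> x; rewrite inE; apply/idP/idP.
- move=> xA; rewrite AP //=.
  have Hx0 : (x \in A) && root_le x x by rewrite xA root_le_refl.
  case: (@arg_maxnP _ x (fun y => (y \in A) && root_le x y)
          (fun y : 'I_n * 'I_n => y.2 - y.1) Hx0) => y /andP[yA xy] Hmax.
  apply/existsP; exists y; rewrite xy andbT.
  rewrite bP inE -surjective_pairing yA /=; apply/forallP=> z; apply/implyP=> zA; apply/implyP=> yz.
  have := Hmax z; rewrite zA (root_le_trans xy yz) /= => /(_ erefl).
  have := AP _ yA; rewrite inE /is_root => /andP[yr _].
  move: yz; rewrite /root_le => /andP[h1 h2] h3.
  apply/eqP; case: y yr h1 h2 h3 {yA xy Hmax} => a b; case: z {zA} => c d /= yr h1 h2 h3.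
  have e1 : c = a by apply: val_inj; rewrite /=; lia.
  have e2 : d = b by apply: val_inj; rewrite /=; lia.
  by rewrite e1 e2.
- case/andP=> xP /existsP[y /andP[by_ xy]].
  have yM : y \in M by move: by_; rewrite bP; case: y {xy}.
  have yA : y \in A by move: yM; rewrite inE => /andP[].
  have := Hid x; rewrite xP /= => /forallP/(_ y); rewrite AP //= xy yA /=.
  by [].
Qed.

End Main.

Theorem lemma5p2 (n : nat) (J : {set 'I_n.-1}) :
  0 < n ->
  exists f : {set {set 'I_n}} -> {set 'I_n * 'I_n},
    {in NNset J &, injective f} /\ f @: NNset J = idealset J.
Proof.
move=> _; exists (fmap J); split; first exact: fmap_inj.
apply/setP=> A; rewrite inE; apply/imsetP/idP.
- by case=> P; rewrite inE => NP ->; exact: fmap_ideal.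
- by case/fmap_surj=> P PN ->; exists P.
Qed.
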